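(* Let $K$ be an $\mathcal R$-dioid, $m\ge 2$, and $e:=\sum_{i<m}q_ip_i\in C_m'$. Let $\phi(x)$ be an expression built with $+$, $\cdot$, ${}^*$ from elements of $K$, the element $\pi=q_0p_0$, the brackets $p_1,\ldots,p_{m-1},q_1,\ldots,q_{m-1}$ and a variable $x$ (so $p_0$ and $q_0$ occur only inside $\pi$), and for $c\in K\otimes_{\mathcal R}C_m'$ let $\phi(c)$ denote its value in $K\otimes_{\mathcal R}C_m'$ with $x:=c$. Then \[ p_0\,\phi(e)\,q_0=p_0\,\phi(1)\,q_0 \quad\text{and}\quad p_0\,\phi(1)\,q_0\in Z_{C_m'}K. \]
   Context: An $\mathcal R$-dioid is a dioid in which every regular subset $A$ of its multiplicative monoid has a least upper bound $\sum A$ with $\sum(AB)=(\sum A)(\sum B)$; equivalently, a $*$-continuous Kleene algebra. An $\mathcal R$-congruence is a semiring congruence $\rho$ such that regular sets with equal downward closures modulo $\rho$ have congruent suprema. $\Delta_m=\{p_0,\dots,p_{m-1},q_0,\dots,q_{m-1}\}$; $C_m'=\mathcal R\Delta_m^*/\rho$ where $\mathcal R\Delta_m^*$ is the algebra of regular languages over $\Delta_m$ and $\rho$ is the least $\mathcal R$-congruence containing $p_iq_j=\delta_{i,j}$ for $i,j<m$. $K\otimes_{\mathcal R}C_m'$ is the tensor product of $\mathcal R$-dioids (universal $\mathcal R$-dioid receiving $\mathcal R$-morphisms from $K$ and $C_m'$ with elementwise commuting images); elements of $K$ and $C_m'$ are identified with their images. $Z_{C_m'}K$ is the set of elements of $K\otimes_{\mathcal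 R}C_m'$ commuting with every element of $C_m'$. *)

(* Defs.v *)
From mathcomp Require Import all_boot all_algebra.
From Stdlib Require Import ClassicalEpsilon.

Set Implicit Arguments.
Unset Strict Implicit.
Unset Printing Implicit Defensive.
Import GRing.Theory.
Local Open Scope ring_scope.

Section DioidDefs.
Variable T : pzSemiRingType.

Definition dle (a b : T) : Prop := a + b = b.

Definition lub (A : T -> Prop) (s : T) : Prop :=
  (forall a, A a -> dle a s) /\ (forall u, (forall a, A a -> dle a u) -> dle s u).

Definition set_prod (A B : T -> Prop) : T -> Prop :=
  fun x => exists a b, A a /\ B b /\ x = a * b.

Inductive set_star (A : T -> Prop) : T -> Prop :=
  | set_star1 : set_star A 1
  | set_starS x a : set_star A x -> A a -> set_star A (x * a).

Inductive regular : (T -> Prop) -> Prop :=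
  | reg_empty : regular (fun _ => False)
  | reg_single a : regular (fun x => x = a)
  | reg_union A B : regular A -> regular B -> regular (fun x => A x \/ B x)
  | reg_prod A B : regular A -> regular B -> regular (set_prod A B)
  | reg_star A : regular A -> regular (set_star A)
  | reg_ext A B : regular A -> (forall x, A x <-> B x) -> regular B.

Definition is_dioid : Prop := forall a : T, a + a = a.

Definition is_Rdioid : Prop :=
  [/\ is_dioid,
      (forall A, regular A -> exists s, lub A s) &
      (forall A B s t, regular A -> regular B -> lub A s -> lub B t ->
         lub (set_prod A B) (s * t))].

Definition kstar (a : T) : T :=
  epsilon (inhabits 0) (lub (set_star (fun x => x = a))).

End DioidDefs.

Definition is_Rmorph (S T : pzSemiRingType) (f : S -> T) : Prop :=
  [/\ f 0 = 0, f 1 = 1,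
      (forall a b, f (a + b) = f a + f b),
      (forall a b, f (a * b) = f a * f b) &
      (forall A s, regular A -> lub A s ->
         lub (fun y => exists x, A x /\ y = f x) (f s))].

(* (C, p, q) is C_m' = R Delta_m^* / rho, characterized as the R-dioid
   presented by generators p_i, q_i and relations p_i q_j = delta_ij
   (R Delta_m^* being the free R-dioid on Delta_m). *)
Definition is_Cm (m : nat) (C : pzSemiRingType) (p q : 'I_m -> C) : Prop :=
  [/\ is_Rdioid C,
      (forall i j, p i * q j = (i == j)%:R) &
      (forall (D : pzSemiRingType) (p' q' : 'I_m -> D),
          is_Rdioid D -> (forall i j, p' i * q' j = (i == j)%:R) ->
          exists h : C -> D,
            [/\ is_Rmorph h,
                (forall i, h (p i) = p' i /\ h (q i) = q' i) &
                (forall h' : C -> D, is_Rmorph h' ->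
                   (forall i, h' (p i) = p' i /\ h' (q i) = q' i) ->
                   forall c, h' c = h c)])].

(* (T, iK, iC) is the tensor product K (x)_R C of R-dioids *)
Definition is_tensor (K C T : pzSemiRingType) (iK : K -> T) (iC : C -> T)
  : Prop :=
  [/\ is_Rdioid T, is_Rmorph iK, is_Rmorph iC,
      (forall k c, iK k * iC c = iC c * iK k) &
      (forall (D : pzSemiRingType) (f : K -> D) (g : C -> D),
          is_Rdioid D -> is_Rmorph f -> is_Rmorph g ->
          (forall k c, f k * g c = g c * f k) ->
          exists h : T -> D,
            [/\ is_Rmorph h, (forall k, h (iK k) = f k),
                (forall c, h (iC c) = g c) &
                (forall h' : T -> D, is_Rmorph h' ->
                   (forall k, h' (iK k) = f k) -> (forall c, h' (iC c) = g c) ->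
                   forall t, h' t = h t)])].

Inductive expr (K : Type) (m : nat) : Type :=
  | Econst of K
  | Epi
  | Ep (i : 'I_m) of (0 < i)%N
  | Eq (i : 'I_m) of (0 < i)%N
  | Evar
  | Eadd of expr K m & expr K m
  | Emul of expr K m & expr K m
  | Estar of expr K m.

Fixpoint eval (K : Type) (T : pzSemiRingType) (m : nat) (iK : K -> T)
  (piv : T) (pb qb : 'I_m -> T) (x : T) (e : expr K m) : T :=
  match e with
  | Econst k => iK k
  | Epi => piv
  | Ep i _ => pb i
  | Eq i _ => qb i
  | Evar => x
  | Eadd a b => eval iK piv pb qb x a + eval iK piv pb qb x b
  | Emul a b => eval iK piv pb qb x a * eval iK piv pb qb x b
  | Estar a => kstar (eval iK piv pb qb x a)
  end.

(* Main.v *)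
Require Import Defs.
From mathcomp Require Import all_boot all_algebra.
From Stdlib Require Import ClassicalEpsilon.
Import GRing.Theory.
Local Open Scope ring_scope.
Set Implicit Arguments.
Unset Strict Implicit.
Unset Printing Implicit Defensive.

Section Dioid.
Variable T : pzSemiRingType.
Hypothesis HR : is_Rdioid T.

Lemma idemT (a : T) : a + a = a.
Proof. by case: HR. Qed.

Lemma dle_refl (a : T) : dle a a.
Proof. exact: idemT. Qed.

Lemma dle_trans (a b c : T) : dle a b -> dle b c -> dle a c.
Proof. rewrite /dle => h1 h2. by rewrite -h2 addrA h1. Qed.

Lemma dle_antisym (a b : T) : dle a b -> dle b a -> a = b.
Proof. rewrite /dle => h1 h2. by rewrite -{1}h2 addrC h1. Qed.

Lemma lub_unique (A : T -> Prop) s t : lub A s -> lub A t -> s = t.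
Proof.
case=> u1 l1 [u2 l2]; apply: dle_antisym; [exact: l1 | exact: l2].
Qed.

Lemma lub_ext (A B : T -> Prop) s : (forall x, A x <-> B x) -> lub A s -> lub B s.
Proof.
move=> hAB [u l]; split.
  by move=> a Ba; apply: u; apply/hAB.
by move=> v hv; apply: l => a Aa; apply: hv; apply/hAB.
Qed.

Lemma lub_single (a : T) : lub (fun x => x = a) a.
Proof. split; [by move=> x ->; exact: dle_refl | by move=> u hu; exact: hu]. Qed.

Lemma lub_union (A B : T -> Prop) s t : lub A s -> lub B t ->
  lub (fun x => A x \/ B x) (s + t).
Proof.
case=> u1 l1 [u2 l2]; split.
  move=> a [Aa|Ba].
    apply: dle_trans (u1 _ Aa) _; by rewrite /dle addrA idemT.
  apply: dle_trans (u2 _ Ba) _; by rewrite /dle [s + t]addrC addrA idemT.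
move=> v hv; rewrite /dle.
have h1 : dle s v by apply: l1 => a Aa; apply: hv; left.
have h2 : dle t v by apply: l2 => a Ba; apply: hv; right.
by rewrite -addrA h2 h1.
Qed.

Lemma dle_mul (x t a s : T) : dle x t -> dle a s -> dle (x * a) (t * s).
Proof.
rewrite /dle => h1 h2.
have -> : t * s = (x + t) * (a + s) by rewrite h1 h2.
by rewrite mulrDl !mulrDr !addrA idemT.
Qed.

Lemma lub_star (A : T -> Prop) s : regular A -> lub A s ->
  lub (set_star A) (kstar s).
Proof.
move=> rA Hs.
have [_ Hex Hprod] := HR.
have rS : regular (set_star (fun x => x = s)) by apply: reg_star; apply: reg_single.
have Ht : lub (set_star (fun x => x = s)) (kstar s).
  rewrite /kstar; apply: epsilon_spec; exact: Hex.
set t := kstar s in Ht *.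
have [u Hu] := Hex _ (reg_star rA).
have C1 : forall y, set_star A y -> dle y t.
  move=> y; elim=> [|x a _ IH Aa]; first by apply: (proj1 Ht); apply: set_star1.
  apply: dle_trans (dle_mul IH ((proj1 Hs) _ Aa)) _.
  have := Hprod _ _ _ _ rS (reg_single s) Ht (lub_single s).
  case=> _ l; apply: l => z [y' [s' [hy' [-> ->]]]].
  by apply: (proj1 Ht); apply: set_starS.
have C2 : forall y, set_star (fun x => x = s) y -> dle y u.
  move=> y; elim=> [|x a _ IH ->]; first by apply: (proj1 Hu); apply: set_star1.
  apply: dle_trans (dle_mul IH (dle_refl s)) _.
  have := Hprod _ _ _ _ (reg_star rA) rA Hu Hs.
  case=> _ l; apply: l => z [y' [s' [hy' [hs' ->]]]].
  by apply: (proj1 Hu); apply: set_starS.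
split; first exact: C1.
move=> v hv; apply: dle_trans ((proj2 Hu) _ hv).
exact: (proj2 Ht).
Qed.

Lemma sandwich (A : T -> Prop) s (a b : T) : regular A -> lub A s ->
  regular (fun t => exists y, A y /\ t = a * y * b) /\
  lub (fun t => exists y, A y /\ t = a * y * b) (a * s * b).
Proof.
move=> rA Hs; have [_ _ Hprod] := HR.
have E : forall t, set_prod (set_prod (fun x => x = a) A) (fun x => x = b) t <->
                   exists y, A y /\ t = a * y * b.
  move=> t; split.
    by case=> z [b' [[a' [y [-> [Ay ->]]]] [-> ->]]]; exists y.
  case=> y [Ay ->]; exists (a * y), b; split=> //.
  by exists a, y.
split.
  apply: reg_ext E; apply: reg_prod; last exact: reg_single.
  by apply: reg_prod => //; exact: reg_single.
refine (lub_ext E _); apply: (Hprod); try exact: reg_single.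
- by apply: reg_prod => //; exact: reg_single.
- by apply: (Hprod) => //; [exact: reg_single | exact: lub_single].
- exact: lub_single.
Qed.

End Dioid.

Inductive lstar (X : Type) (L : seq X -> Prop) : seq X -> Prop :=
| ls_nil : lstar L [::]
| ls_app u v : lstar L u -> L v -> lstar L (u ++ v).

Section Words.
Variables (K : Type) (T : pzSemiRingType) (m : nat).
Variables (iK : K -> T) (piv : T) (pb qb : 'I_m -> T).

Fixpoint lang (f : expr K m) : seq (expr K m) -> Prop :=
  match f with
  | Eadd a b => fun w => lang a w \/ lang b w
  | Emul a b => fun w => exists u v, lang a u /\ lang b v /\ w = u ++ v
  | Estar a => lstar (lang a)
  | _ => fun w => w = [:: f]
  end.

Definition Iw (x : T) (w : seq (expr K m)) : T :=
  \prod_(a <- w) eval iK piv pb qb x a.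

Definition img x f : T -> Prop := fun t => exists w, lang f w /\ t = Iw x w.

Lemma Iw_cat x u v : Iw x (u ++ v) = Iw x u * Iw x v.
Proof. by rewrite /Iw big_cat. Qed.
Lemma Iw_nil x : Iw x [::] = 1.
Proof. by rewrite /Iw big_nil. Qed.
Lemma Iw_seq1 x a : Iw x [:: a] = eval iK piv pb qb x a.
Proof. by rewrite /Iw big_seq1. Qed.

Hypothesis HR : is_Rdioid T.

Lemma atom_case x a :
  regular (fun t => exists w, w = [:: a] /\ t = Iw x w) /\
  lub (fun t => exists w, w = [:: a] /\ t = Iw x w) (eval iK piv pb qb x a).
Proof.
have E : forall t, (t = eval iK piv pb qb x a) <->
   (exists w, w = [:: a] /\ t = Iw x w).
  move=> t; split; first by move=> ->; exists [:: a]; rewrite Iw_seq1.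
  by case=> w [-> ->]; rewrite Iw_seq1.
split; first exact: (reg_ext (reg_single _) E).
exact: (lub_ext E (lub_single HR _)).
Qed.

Lemma img_reg_lub x f : regular (img x f) /\ lub (img x f) (eval iK piv pb qb x f).
Proof.
have [_ Hex Hprod] := HR.
elim: f => [k||i h|i h||a [ra la] b [rb lb]|a [ra la] b [rb lb]|a [ra la]];
  try exact: atom_case.
- have E : forall t, (img x a t \/ img x b t) <-> img x (Eadd a b) t.
    move=> t; split.
      by case=> [[w [hw ->]]|[w [hw ->]]]; exists w; split=> //; [left|right].
    by case=> w [[hw|hw] ->]; [left|right]; exists w.
  split; first exact: (reg_ext (reg_union ra rb) E).
  exact: (lub_ext E (lub_union HR la lb)).
- have E : forall t, set_prod (img x a) (img x b) t <-> img x (Emul a b) t.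
    move=> t; split.
      case=> _ [_ [[u [hu ->]] [[v [hv ->]] ->]]].
      by exists (u ++ v); split; [exists u, v | rewrite Iw_cat].
    case=> w [[u [v [hu [hv ->]]]] ->]; exists (Iw x u), (Iw x v).
    by rewrite Iw_cat; split; [exists u|split; [exists v|]].
  split; first exact: (reg_ext (reg_prod ra rb) E).
  exact: (lub_ext E (Hprod _ _ _ _ ra rb la lb)).
- have E : forall t, set_star (img x a) t <-> img x (Estar a) t.
    move=> t; split.
      elim=> [|y z _ [w [hw ->]] [v [hv ->]]].
        by exists [::]; split; [exact: ls_nil | rewrite Iw_nil].
      by exists (w ++ v); split; [exact: ls_app | rewrite Iw_cat].
    case=> w [hw ->]; elim: hw => [|u v _ IH hv].
      by rewrite Iw_nil; exact: set_star1.
    by rewrite Iw_cat; apply: set_starS IH _; exists v.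
  split; first exact: (reg_ext (reg_star ra) E).
  exact: (lub_ext E (lub_star HR ra la)).
Qed.

Definition atomic (a : expr K m) : Prop :=
  match a with Eadd _ _ | Emul _ _ | Estar _ => False | _ => True end.

Fixpoint allat (w : seq (expr K m)) : Prop :=
  match w with [::] => True | a :: w' => atomic a /\ allat w' end.

Lemma allat_cat u v : allat u -> allat v -> allat (u ++ v).
Proof. by elim: u => //= a u IH [ha hu] hv; split=> //; apply: IH. Qed.

Lemma lang_allat f w : lang f w -> allat w.
Proof.
elim: f w => [k||i h|i h||a IHa b IHb|a IHa b IHb|a IHa] w /=;
  try by move=> ->.
- by case=> [/IHa|/IHb].
- by case=> u [v [hu [hv ->]]]; apply: allat_cat; [apply: IHa|apply: IHb].
- by elim=> [|u v _ IH hv] //; apply: allat_cat => //; apply: IHa.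
Qed.

End Words.

Section Main.
Variables (K C T : pzSemiRingType) (m : nat) (hm : (2 <= m)%N).
Variables (p q : 'I_m -> C) (iK : K -> T) (iC : C -> T).
Hypothesis Hpq : forall i j, p i * q j = (i == j)%:R.
Hypothesis HiC0 : iC 0 = 0.
Hypothesis HiC1 : iC 1 = 1.
Hypothesis HiCM : forall a b, iC (a * b) = iC a * iC b.
Hypothesis Hcomm : forall k c, iK k * iC c = iC c * iK k.

Let i0 : 'I_m := Ordinal (ltnW hm).
Let e : C := \sum_(i < m) q i * p i.

Lemma pq_ne i j : i != j -> p i * q j = 0.
Proof. by move=> /negbTE h; rewrite Hpq h. Qed.
Lemma pq_eq i : p i * q i = 1.
Proof. by rewrite Hpq eqxx. Qed.

Lemma pe j : p j * e = p j.
Proof.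
rewrite /e mulr_sumr (bigD1 j) //= mulrA pq_eq mul1r big1 ?addr0 //.
by move=> i hi; rewrite mulrA pq_ne ?mul0r // eq_sym.
Qed.

Definition Cstate (c : C) : Prop :=
  c = 0 \/ exists s : seq 'I_m, all (fun j => j != i0) s /\ c = p i0 * \prod_(j <- s) p j.

Lemma prod_rcons s j : \prod_(i <- rcons s j) p i = \prod_(i <- s) p i * p j.
Proof. by rewrite -cats1 big_cat big_seq1. Qed.

Lemma st_e c : Cstate c -> c * e = c.
Proof.
case=> [->|[s [_ ->]]]; first by rewrite mul0r.
case/lastP: s => [|s j]; first by rewrite big_nil mulr1 pe.
by rewrite prod_rcons -!mulrA pe.
Qed.

Lemma st_p c i : i != i0 -> Cstate c -> Cstate (c * p i).
Proof.
move=> hi [->|[s [hs ->]]]; first by left; rewrite mul0r.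
right; exists (rcons s i); split; first by rewrite all_rcons hi.
by rewrite prod_rcons !mulrA.
Qed.

Lemma st_q c i : i != i0 -> Cstate c -> Cstate (c * q i).
Proof.
move=> hi [->|[s [hs ->]]]; first by left; rewrite mul0r.
case/lastP: s hs => [|s j] hs.
  by left; rewrite big_nil mulr1 pq_ne // eq_sym.
rewrite all_rcons in hs; case/andP: hs => hj hs.
rewrite prod_rcons -!mulrA.
have [->|hji] := eqVneq j i.
  by rewrite pq_eq !mulr1; right; exists s.
by left; rewrite pq_ne // !mulr0.
Qed.

Lemma st_pi c : Cstate c -> Cstate (c * (q i0 * p i0)).
Proof.
move=> [->|[s [hs ->]]]; first by left; rewrite mul0r.
case/lastP: s hs => [|s j] hs.
  right; exists [::]; split=> //.
  by rewrite big_nil !mulr1 mulrA pq_eq mul1r.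
rewrite all_rcons in hs; case/andP: hs => hj hs.
by left; rewrite prod_rcons -!mulrA mulrA (mulrA (p j)) pq_ne // mul0r !mulr0.
Qed.

Lemma st_q0 c : Cstate c -> c * q i0 = 0 \/ c * q i0 = 1.
Proof.
move=> [->|[s [hs ->]]]; first by left; rewrite mul0r.
case/lastP: s hs => [|s j] hs.
  by right; rewrite big_nil mulr1 pq_eq.
rewrite all_rcons in hs; case/andP: hs => hj hs.
by left; rewrite prod_rcons -!mulrA pq_ne // !mulr0.
Qed.

Definition central (y : T) : Prop := forall c, iC c * y = y * iC c.

Definition Tstate (y : T) : Prop :=
  exists k c, central k /\ Cstate c /\ y = k * iC c.

Let ev x a := eval iK (iC (q i0 * p i0)) (fun i => iC (p i)) (fun i => iC (q i)) x a.

Lemma ne_i0 (i : 'I_m) : (0 < i)%N -> i != i0.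
Proof. by move=> h; apply/eqP => E; move: h; rewrite E. Qed.

Lemma letter_step a y : atomic a -> Tstate y ->
  y * ev (iC e) a = y * ev 1 a /\ Tstate (y * ev 1 a).
Proof.
move=> ha [k [c [hk [hc ->]]]].
have move_C : forall d, Cstate (c * d) -> Tstate (k * iC c * iC d).
  by move=> d hd; exists k, (c * d); split=> //; split=> //; rewrite -mulrA HiCM.
case: a ha => [k'||i h|i h||a b|a b|a] // _; rewrite /ev /=.
- split=> //; exists (k * iK k'), c; split; last split=> //.
    move=> d; rewrite mulrA hk -!mulrA; congr (_ * _); by rewrite Hcomm.
  by rewrite -!mulrA Hcomm.
- by split=> //; apply: move_C; apply: st_pi.
- by split=> //; apply: move_C; apply: st_p => //; apply: ne_i0.
- by split=> //; apply: move_C; apply: st_q => //; apply: ne_i0.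
- rewrite mulr1 -mulrA -HiCM st_e //; split=> //.
  by exists k, c.
Qed.

Lemma word_step w : allat w -> forall y, Tstate y ->
  y * Iw iK (iC (q i0 * p i0)) (fun i => iC (p i)) (fun i => iC (q i)) (iC e) w =
  y * Iw iK (iC (q i0 * p i0)) (fun i => iC (p i)) (fun i => iC (q i)) 1 w /\
  Tstate (y * Iw iK (iC (q i0 * p i0)) (fun i => iC (p i)) (fun i => iC (q i)) 1 w).
Proof.
elim: w => [|a w IH] /= => [_ y hy|[ha hw] y hy].
  by rewrite !Iw_nil mulr1.
rewrite /Iw !big_cons !mulrA.
have [E hy'] := letter_step ha hy.
rewrite /ev in E hy'; rewrite E.
exact: IH.
Qed.

End Main.

Theorem theorem12 (K C T : pzSemiRingType) (m : nat) (hm : (2 <= m)%N)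
  (p q : 'I_m -> C) (iK : K -> T) (iC : C -> T) (phi : expr K m) :
  is_Rdioid K -> is_Cm p q -> is_tensor iK iC ->
  let i0 : 'I_m := Ordinal (ltnW hm) in
  let e : C := \sum_(i < m) q i * p i in
  let ev (x : T) := eval iK (iC (q i0 * p i0)) (fun i => iC (p i))
                         (fun i => iC (q i)) x phi in
  iC (p i0) * ev (iC e) * iC (q i0) = iC (p i0) * ev 1 * iC (q i0) /\
  (forall c : C, iC c * (iC (p i0) * ev 1 * iC (q i0))
                 = (iC (p i0) * ev 1 * iC (q i0)) * iC c).
Proof.
move=> _ [_ Hpq _] [HTR _ [HiC0 HiC1 _ HiCM _] Hcomm _] i0 e ev; rewrite /ev.
set piv := iC (q i0 * p i0).
set pb := fun i => iC (p i).
set qb := fun i => iC (q i).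
have [re le] := img_reg_lub iK piv pb qb HTR (iC e) phi.
have [r1 l1] := img_reg_lub iK piv pb qb HTR 1 phi.
have [rse lse] := sandwich HTR (iC (p i0)) (iC (q i0)) re le.
have [rs1 ls1] := sandwich HTR (iC (p i0)) (iC (q i0)) r1 l1.
have st0 : Tstate hm p iC (iC (p i0)).
  exists 1, (p i0); split; first by move=> d; rewrite mul1r mulr1.
  split; last by rewrite mul1r.
  by right; exists [::]; rewrite big_nil mulr1.
have W : forall w, lang phi w ->
   iC (p i0) * Iw iK piv pb qb (iC e) w = iC (p i0) * Iw iK piv pb qb 1 w /\
   Tstate hm p iC (iC (p i0) * Iw iK piv pb qb 1 w).
  move=> w hw; exact: (word_step Hpq HiCM Hcomm (lang_allat hw) st0).
split.
  apply: (lub_unique lse).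
  refine (lub_ext _ ls1) => t; split.
    case=> y [[w [hw ->]] ->]; exists (Iw iK piv pb qb (iC e) w).
    by split; [exists w | rewrite (W w hw).1].
  case=> y [[w [hw ->]] ->]; exists (Iw iK piv pb qb 1 w).
  by split; [exists w | rewrite (W w hw).1].
move=> c.
have cz : forall z, (exists y, img iK piv pb qb 1 phi y /\
                       z = iC (p i0) * y * iC (q i0)) -> iC c * z = z * iC c.
  move=> z [y [[w [hw ->]] ->]].
  have [k [d [hk [hd ->]]]] := (W w hw).2.
  rewrite -mulrA -HiCM.
  by case: (st_q0 Hpq hd) => ->; rewrite ?HiC0 ?HiC1 ?mulr0 ?mul0r ?mulr1 // hk.
have [_ _ Hprod] := HTR.
have L1 := Hprod _ _ _ _ (reg_single (iC c)) rs1 (lub_single HTR (iC c)) ls1.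
have L2 := Hprod _ _ _ _ rs1 (reg_single (iC c)) ls1 (lub_single HTR (iC c)).
apply: (lub_unique L1).
refine (lub_ext _ L2) => t; split.
  case=> z [c' [hz [-> ->]]]; exists (iC c), z; split=> //; split=> //.
  by rewrite cz.
case=> c' [z [-> [hz ->]]]; exists z, (iC c); split=> //; split=> //.
by rewrite cz.
Qed.
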